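(* Let $n\ge 0$ be an integer and $r>0$. Then the function $F(\eta)=\eta^{2}\frac{I_{n+1/2}'(\eta^{-1}r)}{I_{n+1/2}(\eta^{-1}r)}$ is strictly monotonically increasing in $\eta\in(0,\infty)$.
   Context: $I_{n+1/2}$ denotes the modified Bessel function of the first kind of order $n+\tfrac12$. *)

(* Defs.v *)
From Stdlib Require Import Reals Factorial.
From Coquelicot Require Import Coquelicot.
Open Scope R_scope.

(* Gamma function at half-integers: Gamma(m + 1/2) = (2m)! sqrt(pi) / (4^m m!). *)
Definition gamma_half (m : nat) : R :=
  INR (Factorial.fact (2 * m)) * sqrt PI / (4 ^ m * INR (Factorial.fact m)).

(* Modified Bessel function of the first kind of order n + 1/2, for x > 0:
   I_{n+1/2}(x) = sum_{k>=0} (x/2)^{2k+n+1/2} / (k! Gamma(k + n + 3/2)). *)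
Definition besselI_half (n : nat) (x : R) : R :=
  Series (fun k : nat =>
    Rpower (x / 2) (2 * INR k + INR n + / 2)
    / (INR (Factorial.fact k) * gamma_half (k + n + 1))).

(* Main.v *)
Require Import Defs.
From Stdlib Require Import Reals Lra Lia.
From Coquelicot Require Import Coquelicot.
Open Scope R_scope.

Lemma ps_cv (a : nat -> R) x : ex_pseries a x ->
  Un_cv (sum_f_R0 (fun k => a k * x^k)) (PSeries a x).
Proof.
  intro H. apply ex_pseries_R in H. apply is_series_Reals.
  apply Series_correct. exact H.
Qed.

Lemma ps_pos (a : nat -> R) x : 0 <= x -> (forall k, 0 <= a k) -> 0 < a 0%nat ->
  ex_pseries a x -> 0 < PSeries a x.
Proof.
  intros Hx Ha H0 He.
  apply Rlt_le_trans with (sum_f_R0 (fun k => a k * x^k) 0).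
  simpl. lra.
  apply sum_incr. apply ps_cv; auto.
  intro k. apply Rmult_le_pos; auto. apply pow_le; auto.
Qed.

Lemma sum_lin (f g h k : nat -> R) c1 c2 c3 c4 N :
  sum_f_R0 (fun i => f i * c1 + c2 * g i - h i * c3 - c4 * k i) N =
  sum_f_R0 f N * c1 + c2 * sum_f_R0 g N - sum_f_R0 h N * c3 - c4 * sum_f_R0 k N.
Proof.
  induction N; simpl. ring. rewrite IHN. ring.
Qed.

Lemma sum_nonneg (f : nat -> R) N : (forall i, (i <= N)%nat -> 0 <= f i) -> 0 <= sum_f_R0 f N.
Proof.
  induction N; intro H; simpl. apply H; lia.
  apply Rplus_le_le_0_compat. apply IHN; intros; apply H; lia. apply H; lia.
Qed.

Lemma BK_fin (q a : nat -> R) s t N : 0 <= s <= t ->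
  (forall i j, (i <= j)%nat -> q j * a i <= q i * a j) ->
  0 <= sum_f_R0 (fun k => q k * s^k) N * sum_f_R0 (fun k => a k * t^k) N
     - sum_f_R0 (fun k => q k * t^k) N * sum_f_R0 (fun k => a k * s^k) N.
Proof.
  intros Hst Hqa. induction N.
  - simpl. lra.
  - rewrite !tech5.
    set (c1 := a (S N) * t ^ S N). set (c2 := q (S N) * s ^ S N).
    set (c3 := a (S N) * s ^ S N). set (c4 := q (S N) * t ^ S N).
    assert (E : sum_f_R0 (fun i => (q i * s^i) * c1 + c2 * (a i * t^i) - (q i * t^i) * c3 - c4 * (a i * s^i)) N >= 0).
    { apply Rle_ge, sum_nonneg. intros i Hi.
      replace ((q i * s^i) * c1 + c2 * (a i * t^i) - (q i * t^i) * c3 - c4 * (a i * s^i))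
        with ((q i * a (S N) - q (S N) * a i) * (s^i * t^i) * (t^(S N - i) - s^(S N - i))).
      2:{ unfold c1, c2, c3, c4.
          assert (HN : S N = (i + (S N - i))%nat) by lia.
          set (m := (S N - i)%nat) in *. rewrite HN.
          rewrite !pow_add. ring. }
      apply Rmult_le_pos. apply Rmult_le_pos.
      assert (H := Hqa i (S N) ltac:(lia)). lra.
      apply Rmult_le_pos; apply pow_le; lra.
      assert (H := pow_incr s t (S N - i) Hst). lra. }
    rewrite sum_lin in E. 
    assert (E2 : c2 * c1 - c4 * c3 = 0) by (unfold c1,c2,c3,c4; ring).
    nra.
Qed.

Lemma BK (q a : nat -> R) s t : 0 <= s <= t ->
  (forall i j, (i <= j)%nat -> q j * a i <= q i * a j) ->
  ex_pseries q s -> ex_pseries q t -> ex_pseries a s -> ex_pseries a t ->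
  PSeries q t * PSeries a s <= PSeries q s * PSeries a t.
Proof.
  intros Hst Hqa H1 H2 H3 H4.
  assert (C := CV_minus _ _ _ _ (CV_mult _ _ _ _ (ps_cv _ _ H1) (ps_cv _ _ H4))
                               (CV_mult _ _ _ _ (ps_cv _ _ H2) (ps_cv _ _ H3))).
  assert (C0 : Un_cv (fun _ : nat => 0) 0).
  { intros e He. exists 0%nat. intros. unfold Rdist. rewrite Rminus_eq_0, Rabs_R0. lra. }
  assert (L := Rle_cv_lim (fun N => BK_fin q a s t N Hst Hqa) C0 C).
  lra.
Qed.

Lemma fact_pos_R m : 0 < INR (Factorial.fact m).
Proof. apply lt_0_INR. apply Factorial.lt_O_fact. Qed.

Lemma gamma_half_pos m : 0 < gamma_half m.
Proof.
  unfold gamma_half. apply Rdiv_lt_0_compat.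
  apply Rmult_lt_0_compat. apply fact_pos_R. apply sqrt_lt_R0. apply PI_RGT_0.
  apply Rmult_lt_0_compat. apply pow_lt; lra. apply fact_pos_R.
Qed.

Lemma gamma_half_S m : gamma_half (S m) = (INR m + /2) * gamma_half m.
Proof.
  unfold gamma_half.
  replace (2 * S m)%nat with (S (S (2 * m))) by lia.
  change (Factorial.fact (S (S (2*m)))) with (S (S (2*m)) * Factorial.fact (S (2*m)))%nat.
  change (Factorial.fact (S (2*m))) with (S (2*m) * Factorial.fact (2*m))%nat.
  change (Factorial.fact (S m)) with (S m * Factorial.fact m)%nat.
  rewrite !mult_INR, !S_INR, mult_INR. simpl pow.
  assert (H1 := fact_pos_R m). assert (H2 := fact_pos_R (2*m)).
  assert (H3 : 0 < 4 ^ m) by (apply pow_lt; lra). assert (H4 := pos_INR m).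
  simpl (INR 2). field. lra.
Qed.

Definition acoef n k := / (INR (Factorial.fact k) * gamma_half (k + n + 1)).

Lemma acoef_pos n k : 0 < acoef n k.
Proof. unfold acoef. apply Rinv_0_lt_compat, Rmult_lt_0_compat. apply fact_pos_R. apply gamma_half_pos. Qed.

Lemma acoef_S n k : acoef n (S k) = acoef n k / ((INR k + 1) * (INR k + INR n + 3/2)).
Proof.
  unfold acoef.
  replace (S k + n + 1)%nat with (S (k + n + 1)) by lia.
  rewrite gamma_half_S.
  change (Factorial.fact (S k)) with (S k * Factorial.fact k)%nat.
  rewrite mult_INR, S_INR, !plus_INR. simpl (INR 1).
  assert (H1 := fact_pos_R k). assert (H2 := gamma_half_pos (k+n+1)).
  assert (H4 := pos_INR k). assert (H5 := pos_INR n).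
  field. repeat split; lra.
Qed.

Lemma ps_der_eq n k : PS_derive (acoef n) k = acoef n k / (INR k + INR n + 3/2).
Proof.
  unfold PS_derive. rewrite acoef_S, S_INR.
  assert (H4 := pos_INR k). assert (H5 := pos_INR n).
  field. lra.
Qed.

Lemma acoef_radius n : CV_radius (acoef n) = p_infty.
Proof.
  apply CV_radius_infinite_DAlembert.
  intro k. apply Rgt_not_eq, acoef_pos.
  apply is_lim_seq_le_le with (u := fun _ => 0) (w := fun k => / INR (S k)).
  - intro k. rewrite acoef_S.
    assert (H1 := acoef_pos n k). assert (H4 := pos_INR k). assert (H5 := pos_INR n).
    replace (acoef n k / ((INR k + 1) * (INR k + INR n + 3 / 2)) / acoef n k)
      with (/ ((INR k + 1) * (INR k + INR n + 3 / 2))) by (field; lra).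
    rewrite Rabs_pos_eq. split. left; apply Rinv_0_lt_compat. nra.
    rewrite S_INR. apply Rinv_le_contravar. lra. nra.
    left; apply Rinv_0_lt_compat. nra.
  - apply is_lim_seq_const.
  - replace (Finite 0) with (Rbar_inv p_infty) by reflexivity.
    apply is_lim_seq_inv. apply (is_lim_seq_incr_1 INR). apply is_lim_seq_INR. discriminate.
Qed.

Lemma rep n x : 0 < x -> besselI_half n x = Rpower (x/2) (INR n + /2) * PSeries (acoef n) ((x/2)^2).
Proof.
  intro Hx. unfold besselI_half, PSeries. rewrite <- Series_scal_l.
  apply Series_ext. intro k.
  replace (2 * INR k + INR n + /2) with (INR (2*k) + (INR n + /2)) by (rewrite mult_INR; simpl (INR 2); ring).
  rewrite Rpower_plus, Rpower_pow by lra. rewrite <- pow_mult.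
  unfold acoef. unfold Rdiv. ring.
Qed.

Lemma ex_ps n x : ex_pseries (acoef n) x.
Proof. apply CV_radius_inside. rewrite acoef_radius. exact I. Qed.

Lemma ex_psd n x : ex_pseries (PS_derive (acoef n)) x.
Proof. apply ex_pseries_derive. rewrite acoef_radius. exact I. Qed.

Lemma deriv n x : 0 < x ->
  Derive (besselI_half n) x = Rpower (x/2) (INR n + /2) *
     ((INR n + /2) / x * PSeries (acoef n) ((x/2)^2) + PSeries (PS_derive (acoef n)) ((x/2)^2) * (x/2)).
Proof.
  intro Hx. apply is_derive_unique.
  apply is_derive_ext_loc with (f := fun y => exp ((INR n + /2) * ln (y/2)) * PSeries (acoef n) ((y/2)^2)).
  { exists (mkposreal x Hx). intros y Hy. simpl in Hy.
    unfold ball in Hy; simpl in Hy; unfold AbsRing_ball, abs, minus, plus, opp in Hy; simpl in Hy.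
    apply Rabs_lt_between in Hy.
    rewrite rep by lra. reflexivity. }
  assert (D1 : is_derive (fun y => exp ((INR n + /2) * ln (y/2))) x
                  ((INR n + /2) / x * exp ((INR n + /2) * ln (x/2)))).
  { auto_derive. lra. unfold Rdiv. field. lra. }
  assert (D2 : is_derive (fun y => PSeries (acoef n) ((y/2)^2)) x
                  (x/2 * PSeries (PS_derive (acoef n)) ((x/2)^2))).
  { apply (is_derive_comp (PSeries (acoef n)) (fun y => (y/2)^2)).
    apply is_derive_PSeries. rewrite acoef_radius. exact I.
    auto_derive. reflexivity. field. }
  assert (D := is_derive_mult _ _ _ _ _ D1 D2 (fun a b => Rmult_comm a b)).
  simpl in D. unfold mult, plus in D; simpl in D.
  unfold Rpower. 
  match goal with |- is_derive _ _ ?L => replace L with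
    ((INR n + / 2) / x * exp ((INR n + / 2) * ln (x / 2)) * PSeries (acoef n) ((x / 2) ^ 2) +
       exp ((INR n + / 2) * ln (x / 2)) * (x / 2 * PSeries (PS_derive (acoef n)) ((x / 2) ^ 2))) end.
  exact D. ring.
Qed.

Lemma qa_cond n i j : (i <= j)%nat ->
  PS_derive (acoef n) j * acoef n i <= PS_derive (acoef n) i * acoef n j.
Proof.
  intro Hij. rewrite !ps_der_eq.
  assert (Hi := acoef_pos n i). assert (Hj := acoef_pos n j).
  assert (Hl := le_INR _ _ Hij). assert (H0 := pos_INR i). assert (H5 := pos_INR n).
  unfold Rdiv.
  assert (/ (INR j + INR n + 3/2) <= / (INR i + INR n + 3/2)) by (apply Rinv_le_contravar; lra).
  assert (0 < acoef n i * acoef n j) by nra.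
  nra.
Qed.

Lemma F_eq n r eta : 0 < r -> 0 < eta ->
  eta ^ 2 * (Derive (besselI_half n) (r / eta) / besselI_half n (r / eta)) =
  (INR n + /2) * eta^3 / r + r * eta / 2 *
    (PSeries (PS_derive (acoef n)) ((r/eta/2)^2) / PSeries (acoef n) ((r/eta/2)^2)).
Proof.
  intros Hr He.
  assert (Hx : 0 < r / eta) by (apply Rdiv_lt_0_compat; auto).
  rewrite deriv, rep by exact Hx.
  assert (HE : 0 < Rpower (r / eta / 2) (INR n + / 2)) by (unfold Rpower; apply exp_pos).
  assert (HP : 0 < PSeries (acoef n) ((r / eta / 2) ^ 2)).
  { apply ps_pos. apply pow2_ge_0. intro k; left; apply acoef_pos. apply acoef_pos. apply ex_ps. }
  field. repeat split; lra.
Qed.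

Theorem corollary2p2 (n : nat) (r : R) (hr : 0 < r) :
  forall eta1 eta2 : R, 0 < eta1 -> eta1 < eta2 ->
    eta1 ^ 2 * (Derive (besselI_half n) (r / eta1) / besselI_half n (r / eta1))
    < eta2 ^ 2 * (Derive (besselI_half n) (r / eta2) / besselI_half n (r / eta2)).
Proof.
  intros e1 e2 H1 H12.
  assert (H2 : 0 < e2) by lra.
  rewrite !F_eq by lra.
  set (t1 := (r / e1 / 2) ^ 2). set (t2 := (r / e2 / 2) ^ 2).
  assert (Ht : 0 <= t2 <= t1).
  { unfold t1, t2. split. apply pow2_ge_0. apply pow_incr. split.
    apply Rlt_le, Rdiv_lt_0_compat; [apply Rdiv_lt_0_compat|]; lra.
    unfold Rdiv. apply Rmult_le_compat_r. lra. apply Rmult_le_compat_l. lra.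
    apply Rinv_le_contravar; lra. }
  assert (BKi := BK _ _ t2 t1 Ht (qa_cond n) (ex_psd n t2) (ex_psd n t1) (ex_ps n t2) (ex_ps n t1)).
  assert (HP1 : 0 < PSeries (acoef n) t1).
  { apply ps_pos. lra. intro k; left; apply acoef_pos. apply acoef_pos. apply ex_ps. }
  assert (HP2 : 0 < PSeries (acoef n) t2).
  { apply ps_pos. lra. intro k; left; apply acoef_pos. apply acoef_pos. apply ex_ps. }
  assert (HQ2 : 0 < PSeries (PS_derive (acoef n)) t2).
  { apply ps_pos. lra. intro k; rewrite ps_der_eq; left; apply Rdiv_lt_0_compat.
    apply acoef_pos. assert (H5 := pos_INR n). assert (H0 := pos_INR k). lra.
    rewrite ps_der_eq. apply Rdiv_lt_0_compat. apply acoef_pos.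
    assert (H5 := pos_INR n). simpl. lra. apply ex_psd. }
  set (Q1 := PSeries (PS_derive (acoef n)) t1) in *.
  set (Q2 := PSeries (PS_derive (acoef n)) t2) in *.
  set (P1 := PSeries (acoef n) t1) in *. set (P2 := PSeries (acoef n) t2) in *.
  assert (R12 : Q1 / P1 <= Q2 / P2).
  { apply (Rmult_le_reg_r (P1 * P2)). nra.
    replace (Q1 / P1 * (P1 * P2)) with (Q1 * P2) by (field; lra).
    replace (Q2 / P2 * (P1 * P2)) with (Q2 * P1) by (field; lra). lra. }
  assert (R2 : 0 < Q2 / P2) by (apply Rdiv_lt_0_compat; auto).
  assert (Hnu : 0 < INR n + /2) by (assert (H5 := pos_INR n); lra).
  assert (C1 : (INR n + /2) * e1^3 / r < (INR n + /2) * e2^3 / r).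
  { unfold Rdiv. apply Rmult_lt_compat_r. apply Rinv_0_lt_compat; lra.
    apply Rmult_lt_compat_l. lra. simpl. assert (e1*e1 < e2*e2) by nra. nra. }
  assert (C2 : r * e1 / 2 * (Q1 / P1) <= r * e2 / 2 * (Q2 / P2)).
  { apply Rle_trans with (r * e1 / 2 * (Q2 / P2)).
    apply Rmult_le_compat_l. nra. exact R12.
    apply Rmult_le_compat_r. lra. nra. }
  lra.
Qed.
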